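(* For every modal proposition $A$, if $\mathsf{LC}\vdash A$ then $\mathsf{iGL}\vdash A^\Box$.
   Context: Modal language: propositional variables, $\bot$, $\wedge,\vee,\to$, $\Box$; atomic = variables and $\bot$. $\mathsf{iGL}$: intuitionistic propositional logic in the modal language plus $\Box(A\to B)\to(\Box A\to\Box B)$, $\Box A\to\Box\Box A$, $\Box(\Box A\to A)\to\Box A$, closed under modus ponens and necessitation. $\mathsf{LC}:=\mathsf{iGL}+\{A\to\Box A\}$. Box-translation: $A^\Box:=A\wedge\Box A$ for atomic $A$; $(A\circ B)^\Box:=A^\Box\circ B^\Box$ for $\circ\in\{\wedge,\vee\}$; $(A\to B)^\Box:=(A^\Box\to B^\Box)\wedge\Box(A^\Box\to B^\Box)$; $(\Box A)^\Box:=\Box(A^\Box)$. *)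

(* Defs.v *)
Inductive form : Type :=
| Var : nat -> form
| Bot : form
| And : form -> form -> form
| Or  : form -> form -> form
| Imp : form -> form -> form
| Box : form -> form.

(** Hilbert-style calculus for iGL, optionally extended by the
    axiom schema A -> Box A (giving LC). *)
Inductive prv (lc : bool) : form -> Prop :=
| ax_K  : forall A B, prv lc (Imp A (Imp B A))
| ax_S  : forall A B C,
    prv lc (Imp (Imp A (Imp B C)) (Imp (Imp A B) (Imp A C)))
| ax_AndE1 : forall A B, prv lc (Imp (And A B) A)
| ax_AndE2 : forall A B, prv lc (Imp (And A B) B)
| ax_AndI  : forall A B, prv lc (Imp A (Imp B (And A B)))
| ax_OrI1  : forall A B, prv lc (Imp A (Or A B))
| ax_OrI2  : forall A B, prv lc (Imp B (Or A B))
| ax_OrE   : forall A B C,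
    prv lc (Imp (Imp A C) (Imp (Imp B C) (Imp (Or A B) C)))
| ax_EFQ   : forall A, prv lc (Imp Bot A)
| ax_Kbox  : forall A B, prv lc (Imp (Box (Imp A B)) (Imp (Box A) (Box B)))
| ax_4     : forall A, prv lc (Imp (Box A) (Box (Box A)))
| ax_Lob   : forall A, prv lc (Imp (Box (Imp (Box A) A)) (Box A))
| ax_CP    : forall A, lc = true -> prv lc (Imp A (Box A))
| r_MP  : forall A B, prv lc (Imp A B) -> prv lc A -> prv lc B
| r_Nec : forall A, prv lc A -> prv lc (Box A).

Definition iGL_prv (A : form) : Prop := prv false A.
Definition LC_prv (A : form) : Prop := prv true A.

Fixpoint boxtr (A : form) : form :=
  match A with
  | Var n => And (Var n) (Box (Var n))
  | Bot => And Bot (Box Bot)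
  | And A B => And (boxtr A) (boxtr B)
  | Or A B => Or (boxtr A) (boxtr B)
  | Imp A B => And (Imp (boxtr A) (boxtr B)) (Box (Imp (boxtr A) (boxtr B)))
  | Box A => Box (boxtr A)
  end.

(* Main.v *)
Require Import Defs.
From Stdlib Require Import List.
Import ListNotations.

Inductive der (G : list form) : form -> Prop :=
| d_hyp : forall A, In A G -> der G A
| d_thm : forall A, prv false A -> der G A
| d_mp : forall A B, der G (Imp A B) -> der G A -> der G B.

Lemma pI : forall A, prv false (Imp A A).
Proof.
  intro A.
  eapply r_MP. eapply r_MP. apply (ax_S false A (Imp A A) A).
  apply ax_K. apply (ax_K false A A).
Qed.

Lemma deduction : forall G A B, der (A :: G) B -> der G (Imp A B).
Proof.
  intros G A B H. induction H.
  - destruct H as [<-|H].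
    + apply d_thm, pI.
    + eapply d_mp. apply d_thm, ax_K. now apply d_hyp.
  - eapply d_mp. apply d_thm, ax_K. now apply d_thm.
  - eapply d_mp. eapply d_mp. apply d_thm, ax_S. eassumption. assumption.
Qed.

Lemma der_nil : forall A, der [] A -> prv false A.
Proof.
  intros A H. induction H.
  - destruct H.
  - assumption.
  - eapply r_MP; eassumption.
Qed.

Lemma der_mono : forall G G' A, der G A -> incl G G' -> der G' A.
Proof.
  intros G G' A H Hi. induction H.
  - apply d_hyp; auto.
  - now apply d_thm.
  - eapply d_mp; eauto.
Qed.

Definition stable (X : form) := prv false (Imp X (Box X)).

Lemma der_box : forall G C, Forall stable G -> der G C -> der G (Box C).
Proof.
  induction G as [|a G IH]; intros C HF H.
  - apply d_thm, r_Nec, der_nil, H.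
  - inversion HF; subst.
    assert (H1 : der G (Box (Imp a C))) by (apply IH; auto; apply deduction; auto).
    eapply d_mp. eapply d_mp. apply d_thm, ax_Kbox.
    eapply der_mono. exact H1. intros x Hx; right; auto.
    eapply d_mp. apply d_thm; eassumption. apply d_hyp; left; auto.
Qed.

Lemma dAndE1 : forall G A B, der G (And A B) -> der G A.
Proof. intros. eapply d_mp. apply d_thm, ax_AndE1. eassumption. Qed.
Lemma dAndE2 : forall G A B, der G (And A B) -> der G B.
Proof. intros. eapply d_mp. apply d_thm, ax_AndE2. eassumption. Qed.
Lemma dAndI : forall G A B, der G A -> der G B -> der G (And A B).
Proof. intros. eapply d_mp. eapply d_mp. apply d_thm, ax_AndI. eassumption. eassumption. Qed.

Lemma dBoxMap : forall G A B, prv false (Imp A B) -> der G (Box A) -> der G (Box B).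
Proof. intros. eapply d_mp. eapply d_mp. apply d_thm, ax_Kbox. apply d_thm, r_Nec; eassumption. assumption. Qed.

Lemma dBoxAnd : forall G A B, der G (Box A) -> der G (Box B) -> der G (Box (And A B)).
Proof.
  intros G A B H1 H2. eapply d_mp. eapply d_mp. apply d_thm, ax_Kbox.
  eapply dBoxMap. apply ax_AndI. exact H1. exact H2.
Qed.

Lemma stable_tr : forall A, stable (boxtr A).
Proof.
  unfold stable. induction A; apply der_nil, deduction; simpl.
  - apply dBoxAnd. eapply dAndE2; apply d_hyp; left; eauto.
    eapply d_mp. apply d_thm, ax_4. eapply dAndE2; apply d_hyp; left; eauto.
  - eapply d_mp. apply d_thm, ax_EFQ. eapply dAndE1; apply d_hyp; left; eauto.
  - apply dBoxAnd.
    + eapply d_mp. apply d_thm, IHA1. eapply dAndE1; apply d_hyp; left; eauto.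
    + eapply d_mp. apply d_thm, IHA2. eapply dAndE2; apply d_hyp; left; eauto.
  - eapply d_mp. eapply d_mp. eapply d_mp. apply d_thm, ax_OrE.
    + apply deduction. eapply dBoxMap. apply ax_OrI1.
      eapply d_mp. apply d_thm, IHA1. apply d_hyp; left; auto.
    + apply deduction. eapply dBoxMap. apply ax_OrI2.
      eapply d_mp. apply d_thm, IHA2. apply d_hyp; left; auto.
    + apply d_hyp; left; auto.
  - apply dBoxAnd. eapply dAndE2; apply d_hyp; left; eauto.
    eapply d_mp. apply d_thm, ax_4. eapply dAndE2; apply d_hyp; left; eauto.
  - eapply d_mp. apply d_thm, ax_4. apply d_hyp; left; auto.
Qed.

Lemma imp_tr : forall G A B, Forall stable G ->
  der G (Imp (boxtr A) (boxtr B)) -> der G (boxtr (Imp A B)).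
Proof. intros. simpl. apply dAndI; auto. apply der_box; auto. Qed.

Lemma der_impE : forall G A B, der G (boxtr (Imp A B)) -> der G (boxtr A) -> der G (boxtr B).
Proof. intros. eapply d_mp. eapply dAndE1. exact H. auto. Qed.

Ltac st := repeat first [apply Forall_nil | apply Forall_cons; [apply stable_tr|]].
Ltac it := apply imp_tr; [st|]; apply deduction.
Ltac hyp := apply d_hyp; simpl; tauto.

Theorem lemma4p22 : forall A : form, LC_prv A -> iGL_prv (boxtr A).
Proof.
  intros A H. unfold LC_prv, iGL_prv in *. induction H; apply der_nil.
  - it. it. hyp.
  - it. it. it.
    eapply der_impE. eapply der_impE. apply d_hyp; right; right; left; reflexivity.
    hyp. eapply der_impE. apply d_hyp; right; left; reflexivity. hyp.
  - it. eapply dAndE1. apply d_hyp; left; reflexivity.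
  - it. eapply dAndE2. apply d_hyp; left; reflexivity.
  - it. it. simpl. apply dAndI; hyp.
  - it. simpl. eapply d_mp. apply d_thm, ax_OrI1. hyp.
  - it. simpl. eapply d_mp. apply d_thm, ax_OrI2. hyp.
  - it. it. it. eapply d_mp. eapply d_mp. eapply d_mp. apply d_thm, ax_OrE.
    eapply dAndE1. apply d_hyp; right; right; left; reflexivity.
    eapply dAndE1. apply d_hyp; right; left; reflexivity.
    apply d_hyp; left; reflexivity.
  - it. eapply d_mp. apply d_thm, ax_EFQ. eapply dAndE1. apply d_hyp; left; reflexivity.
  - it. it. simpl. eapply d_mp. eapply d_mp. apply d_thm, ax_Kbox.
    eapply dBoxMap. apply ax_AndE1. apply d_hyp; right; left; reflexivity.
    hyp.
  - apply imp_tr; [st|]. apply d_thm, ax_4.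
  - it. simpl. eapply d_mp. apply d_thm, ax_Lob.
    eapply dBoxMap. apply ax_AndE1. apply d_hyp; left; reflexivity.
  - apply imp_tr; [st|]. apply d_thm, stable_tr.
  - eapply der_impE; apply d_thm; eassumption.
  - apply d_thm, r_Nec; assumption.
Qed.
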